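(* For every integer $n\ll 0$, every representation $\pi_1(\mathcal{M}(1,n))\to SL_2(\mathbb{R})$ is trivial; consequently every representation $\pi_1(\mathcal{M}(1,n))\to PSL_2(\mathbb{R})$ is trivial.
   Context: $\mathcal{M}$ is the SnapPy census manifold $m137$ with $\pi_1(\mathcal{M})=\langle \lambda,\beta \mid \beta^{-1}\lambda^{-1}\beta^{-1}\lambda^{-1}\beta^{2}\lambda=\lambda\beta^{-2}\lambda^{-1}\beta^{2}\rangle$, where $\lambda$ is the homological longitude and $\mu=\beta^2\lambda^{-1}\beta^{-3}\lambda^{-1}\beta^2$ is a meridian of $\partial\mathcal{M}$. For an integer $n$, $\mathcal{M}(1,n)$ is the Dehn filling of $\mathcal{M}$ along the slope $\mu+n\lambda$, with $\pi_1(\mathcal{M}(1,n))=\pi_1(\mathcal{M})/\langle\langle\mu\lambda^n\rangle\rangle$; it is an integral homology $3$-sphere. *)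

(* Defs.v *)
From Stdlib Require Import Reals ZArith List.
Import ListNotations.
Open Scope R_scope.

Record M2 : Type := mkM2 { m11 : R; m12 : R; m21 : R; m22 : R }.

Definition mmul (A B : M2) : M2 :=
  mkM2 (m11 A * m11 B + m12 A * m21 B) (m11 A * m12 B + m12 A * m22 B)
       (m21 A * m11 B + m22 A * m21 B) (m21 A * m12 B + m22 A * m22 B).

Definition mid : M2 := mkM2 1 0 0 1.
Definition mopp (A : M2) : M2 := mkM2 (- m11 A) (- m12 A) (- m21 A) (- m22 A).
Definition mdet (A : M2) : R := m11 A * m22 A - m12 A * m21 A.

Definition inSL2 (A : M2) : Prop := mdet A = 1.

(* inverse of an element of SL_2(R) (adjugate) *)
Definition minv (A : M2) : M2 := mkM2 (m22 A) (- m12 A) (- m21 A) (m11 A).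

Fixpoint mpow_nat (A : M2) (k : nat) : M2 :=
  match k with O => mid | S k' => mmul A (mpow_nat A k') end.

Definition mpowZ (A : M2) (z : Z) : M2 :=
  match z with
  | Z0 => mid
  | Zpos p => mpow_nat A (Pos.to_nat p)
  | Zneg p => mpow_nat (minv A) (Pos.to_nat p)
  end.

Definition mprod (l : list M2) : M2 := List.fold_right mmul mid l.

Definition rel_lhs (L B : M2) : M2 :=
  mprod [minv B; minv L; minv B; minv L; mpowZ B 2; L].
Definition rel_rhs (L B : M2) : M2 :=
  mprod [L; mpowZ B (-2); minv L; mpowZ B 2].
(* meridian mu = b^2 l^-1 b^-3 l^-1 b^2 *)
Definition mu_img (L B : M2) : M2 :=
  mprod [mpowZ B 2; minv L; mpowZ B (-3); minv L; mpowZ B 2].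
Definition fill_img (n : Z) (L B : M2) : M2 := mmul (mu_img L B) (mpowZ L n).

(* A representation pi_1(M(1,n)) -> SL_2(R) is determined by the images
   (L,B) of the generators lambda, beta, which must satisfy the relations. *)
Definition SL2_rep (n : Z) (L B : M2) : Prop :=
  inSL2 L /\ inSL2 B /\ rel_lhs L B = rel_rhs L B /\ fill_img n L B = mid.

Definition psl_eq (A C : M2) : Prop := A = C \/ A = mopp C.

(* A representation pi_1(M(1,n)) -> PSL_2(R), described via SL_2 lifts
   (L,B) of the images of lambda, beta; relations hold in PSL_2(R). *)
Definition PSL2_rep (n : Z) (L B : M2) : Prop :=
  inSL2 L /\ inSL2 B /\ psl_eq (rel_lhs L B) (rel_rhs L B)
  /\ psl_eq (fill_img n L B) mid.

(* Main.v *)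
Require Import Defs.
From Stdlib Require Import Reals ZArith List Lra Lia Psatz.
Import ListNotations.
Open Scope R_scope.

Lemma M2_ext : forall A B : M2, m11 A = m11 B -> m12 A = m12 B -> m21 A = m21 B -> m22 A = m22 B -> A = B.
Proof. intros [a1 a2 a3 a4] [b1 b2 b3 b4]; simpl; intros; subst; reflexivity. Qed.

Definition mtr (A : M2) : R := m11 A + m22 A.

Lemma mmul_assoc : forall A B C, mmul A (mmul B C) = mmul (mmul A B) C.
Proof. intros [] [] []; apply M2_ext; simpl; ring. Qed.
Lemma mmul_mid_l : forall A, mmul mid A = A.
Proof. intros []; apply M2_ext; simpl; ring. Qed.
Lemma mmul_mid_r : forall A, mmul A mid = A.
Proof. intros []; apply M2_ext; simpl; ring. Qed.
Lemma minv_l : forall A, mdet A = 1 -> mmul (minv A) A = mid.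
Proof. intros [a b c d] H; unfold mdet in H; simpl in H; apply M2_ext; simpl; lra. Qed.
Lemma minv_r : forall A, mdet A = 1 -> mmul A (minv A) = mid.
Proof. intros [a b c d] H; unfold mdet in H; simpl in H; apply M2_ext; simpl; lra. Qed.
Lemma mpow_succ_r : forall A k, mpow_nat A (S k) = mmul (mpow_nat A k) A.
Proof.
  intros A k; induction k as [|k IH].
  - simpl. rewrite mmul_mid_l, mmul_mid_r. reflexivity.
  - change (mpow_nat A (S (S k))) with (mmul A (mpow_nat A (S k))).
    rewrite IH at 1. rewrite mmul_assoc. reflexivity.
Qed.
Lemma mpow_inv : forall L k, mdet L = 1 -> mmul (mpow_nat (minv L) k) (mpow_nat L k) = mid.
Proof.
  intros L k H; induction k as [|k IH].
  - simpl. apply mmul_mid_l.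
  - rewrite mpow_succ_r. change (mpow_nat L (S k)) with (mmul L (mpow_nat L k)).
    rewrite <- mmul_assoc. rewrite (mmul_assoc (minv L) L). rewrite minv_l by exact H.
    rewrite mmul_mid_l. exact IH.
Qed.

Fixpoint cheb (y : R) (k : nat) : R :=
  match k with
  | O => 2
  | S k1 => match k1 with O => y | S k2 => y * cheb y k1 - cheb y k2 end
  end.

Lemma tr_step : forall L M, mtr (mmul L (mmul L M)) = mtr L * mtr (mmul L M) - mdet L * mtr M.
Proof. intros [] []; unfold mtr, mdet; simpl; ring. Qed.

Lemma tr_pow : forall L, mdet L = 1 -> forall k, mtr (mpow_nat L k) = cheb (mtr L) k.
Proof.
  intros L H.
  assert (forall k, mtr (mpow_nat L k) = cheb (mtr L) k /\ mtr (mpow_nat L (S k)) = cheb (mtr L) (S k)) as G.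
  { induction k as [|k [IH1 IH2]].
    - split; simpl; unfold mtr, mid; simpl.
      + ring.
      + destruct L; simpl; ring.
    - split; [exact IH2|].
      change (mpow_nat L (S (S k))) with (mmul L (mmul L (mpow_nat L k))).
      rewrite tr_step, H.
      change (mmul L (mpow_nat L k)) with (mpow_nat L (S k)).
      rewrite IH1, IH2. simpl. destruct k; ring. }
  intro k; apply G.
Qed.

Lemma cheb2 : forall k, cheb 2 k = 2.
Proof.
  assert (forall k, cheb 2 k = 2 /\ cheb 2 (S k) = 2) as G.
  { induction k as [|k [IH1 IH2]]; [split; reflexivity|].
    split; [exact IH2|]. change (cheb 2 (S (S k))) with (2 * cheb 2 (S k) - cheb 2 k).
    rewrite IH1, IH2; ring. }
  intro k; apply G.
Qed.

Lemma cheb_t : forall t, t <> 0 -> forall k, cheb (t + / t) k = t ^ k + / t ^ k.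
Proof.
  intros t Ht.
  assert (forall k, cheb (t + / t) k = t ^ k + / t ^ k /\ cheb (t + / t) (S k) = t ^ (S k) + / t ^ (S k)) as G.
  { induction k as [|k [IH1 IH2]].
    - split; simpl; field; auto.
    - split; [exact IH2|].
      change (cheb (t + / t) (S (S k))) with ((t + / t) * cheb (t + / t) (S k) - cheb (t + / t) k).
      rewrite IH1, IH2. simpl. field. split; [apply pow_nonzero; auto | auto]. }
  intro k; apply G.
Qed.

Lemma mu_pow : forall L B p, mdet L = 1 -> fill_img (Z.neg p) L B = mid ->
  mu_img L B = mpow_nat L (Pos.to_nat p).
Proof.
  intros L B p H Hf. unfold fill_img, mpowZ in Hf.
  rewrite <- (mmul_mid_r (mu_img L B)).
  rewrite <- (mpow_inv L (Pos.to_nat p) H).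
  rewrite mmul_assoc, Hf. apply mmul_mid_l.
Qed.

Lemma tr_lhs : forall L B : M2, mtr (rel_lhs L B) = ((mtr B)^3*(mtr (mmul B L))*(mdet L) - (mtr B)^2*(mtr L)*(mtr (mmul B L))^2 + (mtr B)*(mtr L)^2*(mtr (mmul B L))*(mdet B) + (mtr B)*(mtr (mmul B L))^3 - 4*(mtr B)*(mtr (mmul B L))*(mdet B)*(mdet L) + (mtr L)*(mdet B)^2*(mdet L)).
Proof. intros [p q r s] [a b c d]. unfold rel_lhs, mtr, mdet, mprod, minv, mpowZ, mmul, mid; simpl. ring. Qed.

Lemma tr_rhs : forall L B : M2, mtr (rel_rhs L B) = ((mtr B)^4*(mdet L) - (mtr B)^3*(mtr L)*(mtr (mmul B L)) + (mtr B)^2*(mtr L)^2*(mdet B) + (mtr B)^2*(mtr (mmul B L))^2 - 4*(mtr B)^2*(mdet B)*(mdet L) + 2*(mdet B)^2*(mdet L)).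
Proof. intros [p q r s] [a b c d]. unfold rel_rhs, mtr, mdet, mprod, minv, mpowZ, mmul, mid; simpl. ring. Qed.

Lemma tr_lhsB : forall L B : M2, mtr (mmul (rel_lhs L B) B) = ((mtr B)*(mtr L)*(mdet B)^2*(mdet L) - (mtr (mmul B L))*(mdet B)^2*(mdet L)).
Proof. intros [p q r s] [a b c d]. unfold rel_lhs, mtr, mdet, mprod, minv, mpowZ, mmul, mid; simpl. ring. Qed.

Lemma tr_rhsB : forall L B : M2, mtr (mmul (rel_rhs L B) B) = ((mtr B)^5*(mdet L) - (mtr B)^4*(mtr L)*(mtr (mmul B L)) + (mtr B)^3*(mtr L)^2*(mdet B) + (mtr B)^3*(mtr (mmul B L))^2 - 5*(mtr B)^3*(mdet B)*(mdet L) + (mtr B)^2*(mtr L)*(mtr (mmul B L))*(mdet B) - (mtr B)*(mtr L)^2*(mdet B)^2 - (mtr B)*(mtr (mmul B L))^2*(mdet B) + 5*(mtr B)*(mdet B)^2*(mdet L)).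
Proof. intros [p q r s] [a b c d]. unfold rel_rhs, mtr, mdet, mprod, minv, mpowZ, mmul, mid; simpl. ring. Qed.

Lemma tr_lhsL : forall L B : M2, mtr (mmul (rel_lhs L B) L) = ((mtr B)^3*(mtr L)*(mtr (mmul B L))*(mdet L) - (mtr B)^2*(mtr L)^2*(mtr (mmul B L))^2 + (mtr B)^2*(mdet B)*(mdet L)^2 + (mtr B)*(mtr L)^3*(mtr (mmul B L))*(mdet B) + (mtr B)*(mtr L)*(mtr (mmul B L))^3 - 5*(mtr B)*(mtr L)*(mtr (mmul B L))*(mdet B)*(mdet L) + (mtr L)^2*(mdet B)^2*(mdet L) + (mtr (mmul B L))^2*(mdet B)*(mdet L) - 2*(mdet B)^2*(mdet L)^2).
Proof. intros [p q r s] [a b c d]. unfold rel_lhs, mtr, mdet, mprod, minv, mpowZ, mmul, mid; simpl. ring. Qed.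

Lemma tr_rhsL : forall L B : M2, mtr (mmul (rel_rhs L B) L) = ((mtr B)^4*(mtr L)*(mdet L) - (mtr B)^3*(mtr L)^2*(mtr (mmul B L)) + (mtr B)^2*(mtr L)^3*(mdet B) + (mtr B)^2*(mtr L)*(mtr (mmul B L))^2 - 4*(mtr B)^2*(mtr L)*(mdet B)*(mdet L) + (mtr L)*(mdet B)^2*(mdet L)).
Proof. intros [p q r s] [a b c d]. unfold rel_rhs, mtr, mdet, mprod, minv, mpowZ, mmul, mid; simpl. ring. Qed.

Lemma tr_mu : forall L B : M2, mtr (mu_img L B) = (- (mtr B)^7*(mdet L) + (mtr B)^6*(mtr L)*(mtr (mmul B L)) - (mtr B)^5*(mtr L)^2*(mdet B) - (mtr B)^5*(mtr (mmul B L))^2 + 7*(mtr B)^5*(mdet B)*(mdet L) - 3*(mtr B)^4*(mtr L)*(mtr (mmul B L))*(mdet B) + 3*(mtr B)^3*(mtr L)^2*(mdet B)^2 + 3*(mtr B)^3*(mtr (mmul B L))^2*(mdet B) - 14*(mtr B)^3*(mdet B)^2*(mdet L) + 2*(mtr B)^2*(mtr L)*(mtr (mmul B L))*(mdet B)^2 - (mtr B)*(mtr L)^2*(mdet B)^3 - 2*(mtr B)*(mtr (mmul B L))^2*(mdet B)^2 + 7*(mtr B)*(mdet B)^3*(mdet L) - (mtr L)*(mtr (mmul B L))*(mdet B)^3).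
Proof. intros [p q r s] [a b c d]. unfold mu_img, mtr, mdet, mprod, minv, mpowZ, mmul, mid; simpl. ring. Qed.

Lemma tr_muL : forall L B : M2, mtr (mmul (mu_img L B) L) = (- (mtr B)^6*(mtr (mmul B L))*(mdet L) + (mtr B)^5*(mtr L)*(mtr (mmul B L))^2 + (mtr B)^5*(mtr L)*(mdet B)*(mdet L) - 2*(mtr B)^4*(mtr L)^2*(mtr (mmul B L))*(mdet B) - (mtr B)^4*(mtr (mmul B L))^3 + 5*(mtr B)^4*(mtr (mmul B L))*(mdet B)*(mdet L) + (mtr B)^3*(mtr L)^3*(mdet B)^2 - 4*(mtr B)^3*(mtr L)*(mdet B)^2*(mdet L) + (mtr B)^2*(mtr L)^2*(mtr (mmul B L))*(mdet B)^2 + (mtr B)^2*(mtr (mmul B L))^3*(mdet B) - 4*(mtr B)^2*(mtr (mmul B L))*(mdet B)^2*(mdet L) + (mtr B)*(mtr L)*(mdet B)^3*(mdet L) - (mtr (mmul B L))*(mdet B)^3*(mdet L)).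
Proof. intros [p q r s] [a b c d]. unfold mu_img, mtr, mdet, mprod, minv, mpowZ, mmul, mid; simpl. ring. Qed.

Lemma hstep : forall c s a : R, 0 <= c -> 0 < s -> 0 < a -> 0 < c + s * a.
Proof. intros c s a H1 H2 H3. assert (0 < s * a) by (apply Rmult_lt_0_compat; auto). lra. Qed.
Ltac hpos := repeat (apply hstep; [lra | assumption | ]); lra.

Definition NP (t : R) : R := (1 + 3*t + 2*t^2 - 3*t^4 - 5*t^5 - 2*t^6 - 2*t^7 + t^8 + t^9 + t^10 + t^11).
Definition DP (t : R) : R := (- t^3 - 2*t^4 - 3*t^5 - t^6 + t^7 + 3*t^8 + 2*t^9 + t^10).
Definition NQ (t : R) : R := (1 + 2*t + t^2 + t^3 - 2*t^4 - 2*t^5 - 2*t^6 - 2*t^7 + t^8 + t^9 + 2*t^10 + t^11).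
Definition DQ (t : R) : R := (t^2 + 3*t^3 + 6*t^4 + 7*t^5 + 6*t^6 + 3*t^7 + t^8).
Definition Uq (t : R) : R := t^6 * DP t - NP t.
Definition Vq (t : R) : R := (t-1)^2 * (Uq t * DQ t) * (t * (Uq t * DQ t) - (t+1)^2 * (DP t * NQ t)) - t^2 * (DP t * NQ t)^2.
Definition mut (t : R) : R := - (t^3 * (t - 1) * (t^2 + t + 1)^6).
Definition at_ (t : R) : R := - mut t * (t-1)^2 * t.
Definition bt_ (t : R) : R := 10 * (NQ t * DP t) + mut t * (t-1)^2 * (t+1)^2.
Definition ct_ (t : R) : R := 10 * (NP t * DQ t - t^6 * DP t * DQ t) + mut t * t^2.
Definition disc_ (t : R) : R := 4 * at_ t * ct_ t - bt_ t ^ 2.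

Lemma pos_NQ : forall t, 1 < t -> 0 < NQ t.
Proof. intros t Ht. assert (Hs : 0 < t - 1) by lra.
  assert (E : NQ t = 2 + (t - 1) * (11 + (t - 1) * (109 + (t - 1) * (408 + (t - 1) * (834 + (t - 1) * (1092 + (t - 1) * (978 + (t - 1) * (612 + (t - 1) * (265 + (t - 1) * (76 + (t - 1) * (13 + (t - 1) * (1)))))))))))) by (unfold NQ; ring).
  rewrite E. hpos. Qed.

Lemma pos_DQ : forall t, 1 < t -> 0 < DQ t.
Proof. intros t Ht. assert (Hs : 0 < t - 1) by lra.
  assert (E : DQ t = 27 + (t - 1) * (135 + (t - 1) * (297 + (t - 1) * (378 + (t - 1) * (306 + (t - 1) * (162 + (t - 1) * (55 + (t - 1) * (11 + (t - 1) * (1))))))))) by (unfold DQ; ring).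
  rewrite E. hpos. Qed.

Lemma pos_DP : forall t, 1 < t -> 0 < DP t.
Proof. intros t Ht. assert (Hs : 0 < t - 1) by lra.
  assert (E : DP t = 0 + (t - 1) * (27 + (t - 1) * (162 + (t - 1) * (432 + (t - 1) * (675 + (t - 1) * (684 + (t - 1) * (468 + (t - 1) * (217 + (t - 1) * (66 + (t - 1) * (12 + (t - 1) * (1))))))))))) by (unfold DP; ring).
  rewrite E. hpos. Qed.

Lemma pos_U : forall t, 1 < t -> 0 < Uq t.
Proof. intros t Ht. assert (Hs : 0 < t - 1) by lra.
  assert (E : Uq t = 2 + (t - 1) * (45 + (t - 1) * (298 + (t - 1) * (1556 + (t - 1) * (5629 + (t - 1) * (14022 + (t - 1) * (25161 + (t - 1) * (33772 + (t - 1) * (34727 + (t - 1) * (27699 + (t - 1) * (17190 + (t - 1) * (8252 + (t - 1) * (3015 + (t - 1) * (813 + (t - 1) * (153 + (t - 1) * (18 + (t - 1) * (1))))))))))))))))) by (unfold Uq, DP, NP; ring).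
  rewrite E. hpos. Qed.

Lemma pos_V : forall t, 1 < t -> 0 < Vq t.
Proof. intros t Ht. assert (Hs : 0 < t - 1) by lra.
  assert (E : Vq t = 0 + (t - 1) * (0 + (t - 1) * (0 + (t - 1) * (78732 + (t - 1) * (2361960 + (t - 1) * (36630063 + (t - 1) * (388719567 + (t - 1) * (3154318848 + (t - 1) * (20754503154 + (t - 1) * (114686098479 + (t - 1) * (544152064887 + (t - 1) * (2248739375229 + (t - 1) * (8171121940488 + (t - 1) * (26281802545776 + (t - 1) * (75215965461795 + (t - 1) * (192376116550656 + (t - 1) * (441458447154174 + (t - 1) * (912231409219200 + (t - 1) * (1703176353677196 + (t - 1) * (2882032747015509 + (t - 1) * (4432457082958875 + (t - 1) * (6211399445189968 + (t - 1) * (7948687669804506 + (t - 1) * (9306639134687551 + (t - 1) * (9985787156586171 + (t - 1) * (9831880520294434 + (t - 1) * (8892078258135873 + (t - 1) * (7392756625076657 + (t - 1) * (5652589795074384 + (t - 1) * (3975621154227371 + (t - 1) * (2571772708297311 + (t - 1) * (1529519443616414 + (t - 1) * (835722206597988 + (t - 1) * (419082034820015 + (t - 1) * (192599677137591 + (t - 1) * (80974417194855 + (t - 1) * (31074029741974 + (t - 1) * (10854336481736 + (t - 1) * (3439557984425 + (t - 1) * (984742664930 + (t - 1) * (253462320098 + (t - 1) * (58298313406 + (t - 1) * (11894242614 + (t - 1) * (2132876549 + (t - 1) * (332283207 + (t - 1) * (44307122 + (t - 1) * (4957280 + (t - 1) * (452805 + (t - 1) * (32439 + (t - 1) * (1710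 + (t - 1) * (59 + (t - 1) * (1)))))))))))))))))))))))))))))))))))))))))))))))))))) by (unfold Vq, Uq, DP, NP, DQ, NQ; ring).
  rewrite E. hpos. Qed.

Lemma neg_at : forall t, t < -1 -> 0 < - at_ t.
Proof. intros t Ht. assert (Hs : 0 < -1 - t) by lra.
  assert (E : - at_ t = 8 + (-1 - t) * (92 + (-1 - t) * (534 + (-1 - t) * (2065 + (-1 - t) * (5932 + (-1 - t) * (13395 + (-1 - t) * (24580 + (-1 - t) * (37417 + (-1 - t) * (47856 + (-1 - t) * (51798 + (-1 - t) * (47580 + (-1 - t) * (37050 + (-1 - t) * (24332 + (-1 - t) * (13346 + (-1 - t) * (6018 + (-1 - t) * (2177 + (-1 - t) * (608 + (-1 - t) * (123 + (-1 - t) * (16 + (-1 - t) * (1)))))))))))))))))))) by (unfold at_, mut; ring).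
  rewrite E. hpos. Qed.

Lemma neg_ct : forall t, t < -1 -> 0 < - ct_ t.
Proof. intros t Ht. assert (Hs : 0 < -1 - t) by lra.
  assert (E : - ct_ t = 2 + (-1 - t) * (133 + (-1 - t) * (1903 + (-1 - t) * (13841 + (-1 - t) * (65665 + (-1 - t) * (228419 + (-1 - t) * (621941 + (-1 - t) * (1380246 + (-1 - t) * (2563852 + (-1 - t) * (4058300 + (-1 - t) * (5540504 + (-1 - t) * (6574806 + (-1 - t) * (6811746 + (-1 - t) * (6171137 + (-1 - t) * (4884195 + (-1 - t) * (3365607 + (-1 - t) * (2007083 + (-1 - t) * (1026533 + (-1 - t) * (444521 + (-1 - t) * (160040 + (-1 - t) * (46670 + (-1 - t) * (10600 + (-1 - t) * (1760 + (-1 - t) * (190 + (-1 - t) * (10))))))))))))))))))))))))) by (unfold ct_, mut, NP, DQ, DP; ring).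
  rewrite E. hpos. Qed.

Lemma neg_disc : forall t, t < -1 -> 0 < disc_ t.
Proof. intros t Ht. assert (Hs : 0 < -1 - t) by lra.
  assert (E : disc_ t = 64 + (-1 - t) * (4992 + (-1 - t) * (81712 + (-1 - t) * (701504 + (-1 - t) * (4083608 + (-1 - t) * (19192324 + (-1 - t) * (85416132 + (-1 - t) * (388887348 + (-1 - t) * (1729560888 + (-1 - t) * (6966495540 + (-1 - t) * (24444714683 + (-1 - t) * (74113935286 + (-1 - t) * (195108285335 + (-1 - t) * (449812378332 + (-1 - t) * (916087290178 + (-1 - t) * (1660833702600 + (-1 - t) * (2697735120344 + (-1 - t) * (3946868140632 + (-1 - t) * (5223285658187 + (-1 - t) * (6274226864310 + (-1 - t) * (6859329446509 + (-1 - t) * (6839685539536 + (-1 - t) * (6230910767141 + (-1 - t) * (5192849392742 + (-1 - t) * (3963493256979 + (-1 - t) * (2773348950140 + (-1 - t) * (1780879598655 + (-1 - t) * (1050716920838 + (-1 - t) * (570398319757 + (-1 - t) * (285378852476 + (-1 - t) * (131798905133 + (-1 - t) * (56246125530 + (-1 - t) * (22170502379 + (-1 - t) * (8047609088 + (-1 - t) * (2672572336 + (-1 - t) * (803344464 + (-1 - t) * (215274598 + (-1 - t) * (50421084 + (-1 - t) * (10066399 + (-1 - t) * (1658510 + (-1 - t) * (215699 + (-1 - t) * (20700 + (-1 - t) * (1300 + (-1 - t) * (40)))))))))))))))))))))))))))))))))))))))))))) by (unfold disc_, at_, bt_, ct_, mut, NP, DQ, DP, NQ; ring).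
  rewrite E. hpos. Qed.

Lemma neg_DP : forall t, t < -1 -> 0 < DP t.
Proof. intros t Ht. assert (Hs : 0 < -1 - t) by lra.
  assert (E : DP t = 2 + (-1 - t) * (13 + (-1 - t) * (42 + (-1 - t) * (88 + (-1 - t) * (131 + (-1 - t) * (144 + (-1 - t) * (118 + (-1 - t) * (71 + (-1 - t) * (30 + (-1 - t) * (8 + (-1 - t) * (1))))))))))) by (unfold DP; ring).
  rewrite E. hpos. Qed.

Lemma neg_DQ : forall t, t < -1 -> 0 < DQ t.
Proof. intros t Ht. assert (Hs : 0 < -1 - t) by lra.
  assert (E : DQ t = 1 + (-1 - t) * (5 + (-1 - t) * (13 + (-1 - t) * (22 + (-1 - t) * (26 + (-1 - t) * (22 + (-1 - t) * (13 + (-1 - t) * (5 + (-1 - t) * (1))))))))) by (unfold DQ; ring).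
  rewrite E. hpos. Qed.

Lemma mul_nonneg_nonpos : forall a b : R, 0 <= a -> b <= 0 -> a * b <= 0.
Proof. intros; nra. Qed.

Lemma ineq_pos : forall t w, 1 < t -> 0 <= w -> (t-1)^2*w*(t*w - (t+1)^2) - t^2 = 0 ->
   NP t * DQ t + NQ t * DP t * w < t^6 * DP t * DQ t.
Proof.
  intros t w Ht Hw HG.
  pose proof (pos_NQ t Ht) as hNQ. pose proof (pos_DQ t Ht) as hDQ. pose proof (pos_DP t Ht) as hDP.
  pose proof (pos_U t Ht) as hU. pose proof (pos_V t Ht) as hV.
  assert (Ht1 : 0 < (t-1)^2) by (apply pow_lt; lra).
  assert (Ht2 : 0 < t^2) by (apply pow_lt; lra).
  assert (HP : 0 < t*w - (t+1)^2).
  { destruct (Rlt_or_le 0 (t*w - (t+1)^2)) as [h|h]; [exact h|].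
    exfalso. assert (0 <= (t-1)^2 * w) by (apply Rmult_le_pos; lra).
    pose proof (mul_nonneg_nonpos _ _ H h). lra. }
  apply Rnot_le_lt; intro Hc.
  set (Wn := Uq t * DQ t). set (Wd := DP t * NQ t).
  assert (HWd : 0 < Wd) by (apply Rmult_lt_0_compat; lra).
  assert (HWn : 0 < Wn) by (apply Rmult_lt_0_compat; lra).
  assert (H1 : 0 <= Wd * w - Wn).
  { replace (Wd * w - Wn) with ((NP t * DQ t + NQ t * DP t * w) - t^6 * DP t * DQ t) by (unfold Wd, Wn, Uq; ring). lra. }
  assert (H2 : 0 < t*(Wd*w + Wn) - (t+1)^2*Wd).
  { replace (t*(Wd*w + Wn) - (t+1)^2*Wd) with (Wd * (t*w - (t+1)^2) + t * Wn) by ring.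
    assert (0 < Wd * (t*w - (t+1)^2)) by (apply Rmult_lt_0_compat; lra).
    assert (0 < t * Wn) by (apply Rmult_lt_0_compat; lra). lra. }
  assert (Id : Wd^2 * ((t-1)^2*w*(t*w - (t+1)^2) - t^2) - Vq t = (t-1)^2 * (Wd*w - Wn) * (t*(Wd*w + Wn) - (t+1)^2*Wd)).
  { unfold Vq, Wd, Wn. ring. }
  rewrite HG in Id.
  assert (0 <= (t-1)^2 * (Wd*w - Wn) * (t*(Wd*w + Wn) - (t+1)^2*Wd)).
  { apply Rmult_le_pos; [apply Rmult_le_pos|]; lra. }
  lra.
Qed.

Lemma ineq_neg : forall t w, t < -1 -> (t-1)^2*w*(t*w - (t+1)^2) - t^2 = 0 ->
   NP t * DQ t + NQ t * DP t * w < t^6 * DP t * DQ t.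
Proof.
  intros t w Ht HG.
  pose proof (neg_at t Ht) as ha. pose proof (neg_disc t Ht) as hd.
  assert (Id : 10 * (NP t * DQ t + NQ t * DP t * w - t^6 * DP t * DQ t) - mut t * ((t-1)^2*w*(t*w - (t+1)^2) - t^2)
               = at_ t * w^2 + bt_ t * w + ct_ t).
  { unfold at_, bt_, ct_. ring. }
  rewrite HG in Id.
  assert (Id2 : 4 * at_ t * (at_ t * w^2 + bt_ t * w + ct_ t) = (2 * at_ t * w + bt_ t)^2 + disc_ t).
  { unfold disc_. ring. }
  assert (0 < 4 * at_ t * (at_ t * w^2 + bt_ t * w + ct_ t)).
  { rewrite Id2. assert (0 <= (2 * at_ t * w + bt_ t)^2) by (apply pow2_ge_0). lra. }
  assert (at_ t * w^2 + bt_ t * w + ct_ t < 0).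
  { destruct (Rlt_or_le (at_ t * w^2 + bt_ t * w + ct_ t) 0) as [h|h]; [exact h|].
    exfalso. assert (0 <= (- at_ t) * (at_ t * w^2 + bt_ t * w + ct_ t)) by (apply Rmult_le_pos; lra). nra. }
  lra.
Qed.

Definition A0 (y : R) := - y^3 - y^2 + 4*y + 1.
Definition Bn (y : R) := y^3 - 3*y - 1.
Definition Cn (y : R) := y^3 + 2*y^2 - 2*y - 2.
Definition Dn (y : R) := - y^2 + y + 1.

Lemma t2t1_pos : forall t, 0 < t^2 + t + 1.
Proof. intro t. nra. Qed.

Lemma m_sq : forall x t, t <> 0 -> t - 1 <> 0 ->
  let y := t + / t in let w := (y + 1) * x^2 in
  let F0 := A0 y + Cn y * t / (y + 1) in let F1 := (Bn y + Dn y * t) / (y + 1) in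
  (x * (A0 y + Bn y * x^2) + x * (Cn y + Dn y * (y + 1) * x^2) * t / (y + 1))^2
   - (NP t / DP t + NQ t / DQ t * w)
  = (F1^2 * w + F1^2 * (y + 2) + 2 * F0 * F1) / ((y + 1) * (y - 2)) * ((y - 2) * w * (w - y - 2) - 1).
Proof.
  intros x t H0 H1 y w F0 F1. unfold F0, F1, w, y, NP, DP, NQ, DQ, A0, Bn, Cn, Dn.
  pose proof (t2t1_pos t) as H2.
  assert (H3 : t * t + 1 + t <> 0) by nra.
  assert (H4 : t * t + 1 - 2 * t <> 0).
  { replace (t * t + 1 - 2 * t) with ((t-1)*(t-1)) by ring. apply Rmult_integral_contrapositive_currified; auto. }
  assert (H5 : t^2 + 3*t^3 + 6*t^4 + 7*t^5 + 6*t^6 + 3*t^7 + t^8 <> 0).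
  { replace (t^2 + 3*t^3 + 6*t^4 + 7*t^5 + 6*t^6 + 3*t^7 + t^8) with (t^2 * (t^2+t+1)^3) by ring.
    apply Rmult_integral_contrapositive_currified; apply pow_nonzero; lra. }
  assert (H6 : - t^3 - 2*t^4 - 3*t^5 - t^6 + t^7 + 3*t^8 + 2*t^9 + t^10 <> 0).
  { replace (- t^3 - 2*t^4 - 3*t^5 - t^6 + t^7 + 3*t^8 + 2*t^9 + t^10) with (t^3 * (t - 1) * (t^2+t+1)^3) by ring.
    apply Rmult_integral_contrapositive_currified; [apply Rmult_integral_contrapositive_currified|]; try apply pow_nonzero; auto; lra. }
  field. repeat split; auto.
Qed.

Lemma exists_t : forall y, 4 < y * y -> exists t, t * t - y * t + 1 = 0 /\ (1 < t \/ t < -1).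
Proof.
  intros y Hy.
  assert (Hs : 0 <= y * y - 4) by lra.
  pose proof (sqrt_sqrt _ Hs) as Es.
  assert (Hsp : 0 < sqrt (y * y - 4)) by (apply sqrt_lt_R0; lra).
  destruct (Rlt_or_le 0 y) as [Hy0|Hy0].
  - exists ((y + sqrt (y*y-4)) / 2). split.
    + replace (((y + sqrt (y*y-4)) / 2) * ((y + sqrt (y*y-4)) / 2) - y * ((y + sqrt (y*y-4)) / 2) + 1)
        with ((sqrt (y*y-4) * sqrt (y*y-4) - y*y + 4)/4) by field. rewrite Es. field.
    + left. assert (2 < y) by nra. lra.
  - exists ((y - sqrt (y*y-4)) / 2). split.
    + replace (((y - sqrt (y*y-4)) / 2) * ((y - sqrt (y*y-4)) / 2) - y * ((y - sqrt (y*y-4)) / 2) + 1)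
        with ((sqrt (y*y-4) * sqrt (y*y-4) - y*y + 4)/4) by field. rewrite Es. field.
    + right. assert (y < -2) by nra. lra.
Qed.
Ltac fld := field; repeat split; auto; try lra.

Lemma Tsq_ge : forall t k, (3 <= k)%nat -> 1 < t * t -> t^6 <= (t^k)^2.
Proof.
  intros t k Hk Ht.
  replace (t^6) with ((t*t)^3) by ring.
  replace ((t^k)^2) with ((t*t)^k) by (rewrite Rpow_mult_distr; ring).
  apply Rle_pow; [lra|exact Hk].
Qed.

Lemma hyper : forall x y (k : nat), (3 <= k)%nat -> 4 < y*y ->
  (y-2)*(y+1)*x^2*((y+1)*x^2 - y - 2) - 1 = 0 ->
  (y^2-4)*(x*(A0 y + Bn y*x^2)) - ((y^2-2)*cheb y k - y*cheb y (S k)) = 0 ->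
  (y^2-4)*(x*(Cn y + Dn y*(y+1)*x^2)) - (y+1)*(2*cheb y (S k) - y*cheb y k) = 0 -> False.
Proof.
  intros x y k Hk Hy HG He1 He2.
  destruct (exists_t y Hy) as [t [Ht Htt]].
  assert (Ht0 : t <> 0) by (destruct Htt; lra).
  assert (Ht1 : t - 1 <> 0) by (destruct Htt; lra).
  assert (Htp : t + 1 <> 0) by (destruct Htt; lra).
  assert (Hyt : y = t + / t).
  { apply (Rmult_eq_reg_l t); [|exact Ht0].
    replace (t * (t + / t)) with (t * t + 1) by fld. nra. }
  subst y.
  rewrite !cheb_t in He1, He2 by exact Ht0.
  change (t ^ S k) with (t * t ^ k) in He1, He2.
  assert (HT : t ^ k <> 0) by (apply pow_nonzero; auto).
  set (T := t ^ k) in *.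
  set (al := x * (A0 (t + /t) + Bn (t + /t) * x^2)) in *.
  set (be := x * (Cn (t + /t) + Dn (t + /t) * (t + /t + 1) * x^2)) in *.
  assert (Hy4 : (t + /t)^2 - 4 <> 0).
  { replace ((t + /t)^2 - 4) with (((t-1)*(t+1)/t)^2) by fld.
    apply pow_nonzero. unfold Rdiv. repeat apply Rmult_integral_contrapositive_currified; auto.
    apply Rinv_neq_0_compat; auto. }
  pose proof (t2t1_pos t) as Ht2.
  assert (Hy1 : t + /t + 1 <> 0).
  { replace (t + /t + 1) with ((t^2+t+1)/t) by fld.
    unfold Rdiv. apply Rmult_integral_contrapositive_currified; [lra|]. apply Rinv_neq_0_compat; auto. }
  assert (Hm : al + be * t / (t + /t + 1) = T).
  { apply (Rmult_eq_reg_l (((t + /t)^2 - 4) * (t + /t + 1))).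
    2: apply Rmult_integral_contrapositive_currified; auto.
    transitivity ((t + /t + 1) * (((t + /t)^2 - 4) * al) + t * (((t + /t)^2 - 4) * be)).
    { fld. }
    replace (((t + /t)^2 - 4) * al) with (((t + /t)^2 - 2) * (T + / T) - (t + /t) * (t * T + / (t * T))) by lra.
    replace (((t + /t)^2 - 4) * be) with ((t + /t + 1) * (2 * (t * T + / (t * T)) - (t + /t) * (T + / T))) by lra.
    field. auto. }
  pose proof (m_sq x t Ht0 Ht1) as Hsq. cbv zeta in Hsq. fold al be in Hsq.
  set (w := (t + / t + 1) * x ^ 2) in *.
  assert (HG' : (t + / t - 2) * w * (w - (t + / t) - 2) - 1 = 0) by (rewrite <- HG; unfold w; ring).
  rewrite HG', Rmult_0_r, Hm in Hsq.
  assert (HGp : (t-1)^2*w*(t*w - (t+1)^2) - t^2 = 0).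
  { transitivity (t^2 * ((t + / t - 2) * w * (w - (t + / t) - 2) - 1)).
    - fld.
    - rewrite HG'. ring. }
  assert (Hlow : t^6 <= T^2) by (apply Tsq_ge; [exact Hk | destruct Htt; nra]).
  destruct Htt as [Htp1|Htn1].
  - assert (Hw : 0 <= w).
    { unfold w. apply Rmult_le_pos; [|apply pow2_ge_0].
      replace (t + / t + 1) with ((t^2+t+1)/t) by fld.
      unfold Rdiv. apply Rmult_le_pos; [lra|]. left; apply Rinv_0_lt_compat; lra. }
    pose proof (ineq_pos t w Htp1 Hw HGp) as Hi.
    pose proof (pos_DP t Htp1). pose proof (pos_DQ t Htp1).
    assert (HT2 : T^2 = NP t / DP t + NQ t / DQ t * w) by lra.
    assert (T^2 * (DP t * DQ t) < t^6 * (DP t * DQ t)).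
    { rewrite HT2. replace ((NP t / DP t + NQ t / DQ t * w) * (DP t * DQ t)) with (NP t * DQ t + NQ t * DP t * w) by fld. lra. }
    assert (0 < DP t * DQ t) by (apply Rmult_lt_0_compat; lra).
    nra.
  - pose proof (ineq_neg t w Htn1 HGp) as Hi.
    pose proof (neg_DP t Htn1). pose proof (neg_DQ t Htn1).
    assert (HT2 : T^2 = NP t / DP t + NQ t / DQ t * w) by lra.
    assert (T^2 * (DP t * DQ t) < t^6 * (DP t * DQ t)).
    { rewrite HT2. replace ((NP t / DP t + NQ t / DQ t * w) * (DP t * DQ t)) with (NP t * DQ t + NQ t * DP t * w) by fld. lra. }
    assert (0 < DP t * DQ t) by (apply Rmult_lt_0_compat; lra).
    nra.
Qed.

Lemma traceland : forall (x y z : R) (k : nat), (3 <= k)%nat ->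
  (- x^4 + x^3*y*z + x^3*z - x^2*y^2 - x^2*y*z^2 - x^2*z^2 + 4*x^2 + x*y^2*z + x*z^3 - 4*x*z + y - 2) = 0 -> (- x^5 + x^4*y*z - x^3*y^2 - x^3*z^2 + 5*x^3 - x^2*y*z + x*y^2 + x*y + x*z^2 - 5*x - z) = 0 -> (- x^4*y + x^3*y^2*z + x^3*y*z - x^2*y^3 - x^2*y^2*z^2 - x^2*y*z^2 + 4*x^2*y + x^2 + x*y^3*z + x*y*z^3 - 5*x*y*z + y^2 - y + z^2 - 2) = 0 ->
  (- x^7 + x^6*y*z - x^5*y^2 - x^5*z^2 + 7*x^5 - 3*x^4*y*z + 3*x^3*y^2 + 3*x^3*z^2 - 14*x^3 + 2*x^2*y*z - x*y^2 - 2*x*z^2 + 7*x - y*z) = cheb y k -> (- x^6*z + x^5*y*z^2 + x^5*y - 2*x^4*y^2*z - x^4*z^3 + 5*x^4*z + x^3*y^3 - 4*x^3*y + x^2*y^2*z + x^2*z^3 - 4*x^2*z + x*y - z) = cheb y (S k) ->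
  (y * y < 4 -> 0 <= x^2 + y^2 + z^2 - x*y*z - 4) ->
  y = 2 /\ x = 2 /\ z = 2.
Proof.
  intros x y z k Hk hI hB hL hM hML hell.
  destruct (Req_dec y 2) as [Hy|Hy].
  - subst y. rewrite cheb2 in hM, hML. split; [reflexivity|].
    assert (Ex2 : forall y, y = 2 -> x - 2 = (- x^3 - x^2*z - x*y*z^4 + 5*x*y*z^2 - 4*x*y - x*z^2 + 5*x - z^3 + 5*z) * ((- x^4 + x^3*y*z + x^3*z - x^2*y^2 - x^2*y*z^2 - x^2*z^2 + 4*x^2 + x*y^2*z + x*z^3 - 4*x*z + y - 2)) + (- 2) * ((- x^5 + x^4*y*z - x^3*y^2 - x^3*z^2 + 5*x^3 - x^2*y*z + x*y^2 + x*y + x*z^2 - 5*x - z)) + (x*z^4 - 5*x*z^2 + 4*x) * ((- x^4*y + x^3*y^2*z + x^3*y*z - x^2*y^3 - x^2*y^2*z^2 - x^2*y*z^2 + 4*x^2*y + x^2 + x*y^3*z + x*y*z^3 - 5*x*y*z + y^2 - y + z^2 - 2)) + (x^3 + x^2*z + x*y*z^4 - 5*x*y*z^2 + 3*x*y + x*z^4 - 4*x*z^2 - x + z^3 - 4*z) * (y - 2) + (1) * ((- x^7 + x^6*y*z - x^5*y^2 - x^5*z^2 + 7*x^5 - 3*x^4*y*z + 3*x^3*y^2 + 3*x^3*z^2 - 14*x^3 + 2*x^2*y*z - x*y^2 - 2*x*z^2 + 7*x - y*z) - 2)) by (intros y0 Hy0; subst y0; ring).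
    specialize (Ex2 2 eq_refl).
    assert (Ez2 : forall y, y = 2 -> z - 2 = (- x^3 - x^2*z - x*y*z^4 + 6*x*y*z^2 - 5*x*y - x*z^2 + 6*x - z^3 + 6*z) * ((- x^4 + x^3*y*z + x^3*z - x^2*y^2 - x^2*y*z^2 - x^2*z^2 + 4*x^2 + x*y^2*z + x*z^3 - 4*x*z + y - 2)) + (- 3) * ((- x^5 + x^4*y*z - x^3*y^2 - x^3*z^2 + 5*x^3 - x^2*y*z + x*y^2 + x*y + x*z^2 - 5*x - z)) + (x*z^4 - 6*x*z^2 + 5*x) * ((- x^4*y + x^3*y^2*z + x^3*y*z - x^2*y^3 - x^2*y^2*z^2 - x^2*y*z^2 + 4*x^2*y + x^2 + x*y^3*z + x*y*z^3 - 5*x*y*z + y^2 - y + z^2 - 2)) + (x^3 + x^2*z + x*y*z^4 - 6*x*y*z^2 + 4*x*y + x*z^4 - 5*x*z^2 + z^3 - 5*z) * (y - 2) + (1) * ((- x^7 + x^6*y*z - x^5*y^2 - x^5*z^2 + 7*x^5 - 3*x^4*y*z + 3*x^3*y^2 + 3*x^3*z^2 - 14*x^3 + 2*x^2*y*z - x*y^2 - 2*x*z^2 + 7*x - y*z) - 2)) by (intros y0 Hy0; subst y0; ring).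
    specialize (Ez2 2 eq_refl).
    rewrite ?hI, ?hB, ?hL, ?hM, ?hML in Ex2. rewrite ?hI, ?hB, ?hL, ?hM, ?hML in Ez2.
    split; lra.
  - exfalso.
    assert (E1 : x^2 + y^2 + z^2 - x*y*z - 2 - (y^2 - y) = (- y) * ((- x^4 + x^3*y*z + x^3*z - x^2*y^2 - x^2*y*z^2 - x^2*z^2 + 4*x^2 + x*y^2*z + x*z^3 - 4*x*z + y - 2)) + (1) * ((- x^4*y + x^3*y^2*z + x^3*y*z - x^2*y^3 - x^2*y^2*z^2 - x^2*y*z^2 + 4*x^2*y + x^2 + x*y^3*z + x*y*z^3 - 5*x*y*z + y^2 - y + z^2 - 2))) by ring.
    rewrite ?hI, ?hB, ?hL in E1.
    assert (E1b : x^2 + y^2 + z^2 - x*y*z - 2 - (y^2 - y) = 0) by (rewrite E1; ring).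
    assert (Hk1 : x^2 + y^2 + z^2 - x*y*z - 4 = y^2 - y - 2) by lra.
    assert (E2 : (y - 2) * ((y-2)*(y+1)*x^2*((y+1)*x^2 - y - 2) - 1) = (x^4*y^3 - 2*x^4*y - x^3*y^3*z + x^3*y*z + x^2*y^4 - x^2*y^3 - 4*x^2*y^2 + 3*x^2*y + 2*x^2 + x*y^3*z + x*y*z^3 - 5*x*y*z + x*z + y^2 - y + z^2 - 3) * ((- x^4 + x^3*y*z + x^3*z - x^2*y^2 - x^2*y*z^2 - x^2*z^2 + 4*x^2 + x*y^2*z + x*z^3 - 4*x*z + y - 2)) + (- x^4*y^2 + 2*x^4 + x^3*y^2*z - x^3*z - x^2*y^3 + x^2*y^2 + 3*x^2*y - 3*x^2 - x*y^2*z - x*z^3 + 5*x*z - y + 2) * ((- x^4*y + x^3*y^2*z + x^3*y*z - x^2*y^3 - x^2*y^2*z^2 - x^2*y*z^2 + 4*x^2*y + x^2 + x*y^3*z + x*y*z^3 - 5*x*y*z + y^2 - y + z^2 - 2))) by ring.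
    rewrite ?hI, ?hB, ?hL in E2.
    assert (HG : (y-2)*(y+1)*x^2*((y+1)*x^2 - y - 2) - 1 = 0).
    { assert (E2' : (y - 2) * ((y-2)*(y+1)*x^2*((y+1)*x^2 - y - 2) - 1) = 0) by (rewrite E2; ring).
      apply Rmult_integral in E2'. destruct E2' as [h|h]; [exfalso; apply Hy; lra | exact h]. }
    assert (E4 : (y^2-4)*(x*(A0 y + Bn y*x^2)) - ((y^2-2)*(- x^7 + x^6*y*z - x^5*y^2 - x^5*z^2 + 7*x^5 - 3*x^4*y*z + 3*x^3*y^2 + 3*x^3*z^2 - 14*x^3 + 2*x^2*y*z - x*y^2 - 2*x*z^2 + 7*x - y*z) - y*(- x^6*z + x^5*y*z^2 + x^5*y - 2*x^4*y^2*z - x^4*z^3 + 5*x^4*z + x^3*y^3 - 4*x^3*y + x^2*y^2*z + x^2*z^3 - 4*x^2*z + x*y - z)) = (x^3*y^4 + 2*x^3*y^3 - x^3*y^2 + 2*x^3 - x^2*y^4*z - 3*x^2*y^3*z - 4*x^2*y^2*z + 2*x^2*z + x*y^5 + 2*x*y^4 + x*y^3*z^2 - 3*x*y^3 + 3*x*y^2*z^2 - 11*x*y^2 + 3*x*y*z^2 - 10*x*y + y^3*z + y^2*z + z) * ((- x^4 + x^3*y*z + x^3*z - x^2*y^2 - x^2*y*z^2 - x^2*z^2 + 4*x^2 + x*y^2*z + x*z^3 - 4*x*z + y - 2)) + (- y^2*z^2 + y^2 + y*z^2 + 2*z^2 - 6) * ((- x^5 + x^4*y*z - x^3*y^2 -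 x^3*z^2 + 5*x^3 - x^2*y*z + x*y^2 + x*y + x*z^2 - 5*x - z)) + (- x^3*y^3 - 2*x^3*y^2 + x^2*y^3*z + 3*x^2*y^2*z + 3*x^2*y*z + x^2*z - x*y^4 - 2*x*y^3 - x*y^2*z^2 + 2*x*y^2 - 3*x*y*z^2 + 10*x*y - 3*x*z^2 + 10*x - y^2*z + y*z + 2*z) * ((- x^4*y + x^3*y^2*z + x^3*y*z - x^2*y^3 - x^2*y^2*z^2 - x^2*y*z^2 + 4*x^2*y + x^2 + x*y^3*z + x*y*z^3 - 5*x*y*z + y^2 - y + z^2 - 2))) by (unfold A0, Bn; ring).
    rewrite ?hI, ?hB, ?hL, ?hM, ?hML in E4.
    assert (E5 : (y^2-4)*(x*(Cn y + Dn y*(y+1)*x^2)) - (y+1)*(2*(- x^6*z + x^5*y*z^2 + x^5*y - 2*x^4*y^2*z - x^4*z^3 + 5*x^4*z + x^3*y^3 - 4*x^3*y + x^2*y^2*z + x^2*z^3 - 4*x^2*z + x*y - z) - y*(- x^7 + x^6*y*z - x^5*y^2 - x^5*z^2 + 7*x^5 - 3*x^4*y*z + 3*x^3*y^2 + 3*x^3*z^2 - 14*x^3 + 2*x^2*y*z - x*y^2 - 2*x*z^2 + 7*x - y*z)) = (- x^3*y^4 - 2*x^3*y^3 - 2*x^3*y + x^2*y^4*z + 3*x^2*y^3*z + 5*x^2*y^2*z - 2*x^2*z - x*y^5 - 2*x*y^4 - x*y^3*z^2 + 3*x*y^3 - 3*x*y^2*z^2 + 14*x*y^2 - 4*x*y*z^2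 + 16*x*y - 3*x - y^3*z - y^2*z - 2*z) * ((- x^4 + x^3*y*z + x^3*z - x^2*y^2 - x^2*y*z^2 - x^2*z^2 + 4*x^2 + x*y^2*z + x*z^3 - 4*x*z + y - 2)) + (y^2*z^2 - y*z^2 - 2*z^2 + 6) * ((- x^5 + x^4*y*z - x^3*y^2 - x^3*z^2 + 5*x^3 - x^2*y*z + x*y^2 + x*y + x*z^2 - 5*x - z)) + (x^3*y^3 + 2*x^3*y^2 + x^3*y + 3*x^3 - x^2*y^3*z - 3*x^2*y^2*z - 4*x^2*y*z - x^2*z + x*y^4 + 2*x*y^3 + x*y^2*z^2 - 2*x*y^2 + 3*x*y*z^2 - 13*x*y + 4*x*z^2 - 16*x + y^2*z - y*z - 2*z) * ((- x^4*y + x^3*y^2*z + x^3*y*z - x^2*y^3 - x^2*y^2*z^2 - x^2*y*z^2 + 4*x^2*y + x^2 + x*y^3*z + x*y*z^3 - 5*x*y*z + y^2 - y + z^2 - 2))) by (unfold Cn, Dn; ring).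
    rewrite ?hI, ?hB, ?hL, ?hM, ?hML in E5.
    assert (He1 : (y^2-4)*(x*(A0 y + Bn y*x^2)) - ((y^2-2)*cheb y k - y*cheb y (S k)) = 0) by (rewrite E4; ring).
    assert (He2 : (y^2-4)*(x*(Cn y + Dn y*(y+1)*x^2)) - (y+1)*(2*cheb y (S k) - y*cheb y k) = 0) by (rewrite E5; ring).
    destruct (Rlt_or_le (y*y) 4) as [Hyl|Hyl].
    + specialize (hell Hyl).
      assert (Hym : y <= -1) by nra.
      assert (Hy2 : -2 < y) by nra.
      assert (Hx2 : 0 <= x^2) by apply pow2_ge_0.
      assert (Hw : (y+1)*x^2 <= 0) by nra.
      assert (Hp1 : 0 <= (y-2)*((y+1)*x^2)) by nra.
      assert (Hp2 : (y+1)*x^2 - y - 2 < 0) by lra.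
      assert (Hp3 : (y-2)*((y+1)*x^2)*((y+1)*x^2 - y - 2) <= 0) by (apply mul_nonneg_nonpos; lra).
      replace ((y-2)*(y+1)*x^2*((y+1)*x^2 - y - 2)) with ((y-2)*((y+1)*x^2)*((y+1)*x^2 - y - 2)) in HG by ring.
      lra.
    + destruct (Req_dec (y*y) 4) as [Hy4|Hy4].
      * assert (Hym2 : y = -2).
        { assert ((y-2)*(y+2) = 0) by nra. apply Rmult_integral in H. destruct H; [exfalso; apply Hy; lra | lra]. }
        subst y. assert (0 <= x^4) by (replace (x^4) with ((x^2)^2) by ring; apply pow2_ge_0). nra.
      * apply (hyper x y k Hk); [lra | exact HG | exact He1 | exact He2].
Qed.
Lemma para : forall L B : M2, mdet L = 1 -> mdet B = 1 -> mtr L = 2 -> mtr B = 2 -> mtr (mmul B L) = 2 ->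
  rel_lhs L B = rel_rhs L B -> L = mid.
Proof.
  intros [p q r s] [a b c d] hL hB htL htB htBL hrel.
  unfold mtr in htL, htB; simpl in htL, htB.
  assert (Es : s = 2 - p) by lra. assert (Ed : d = 2 - a) by lra. subst s d.
  set (LL := mkM2 p q r (2 - p)) in *. set (BB := mkM2 a b c (2 - a)) in *.
  assert (g1 : p*(2-p) - q*r - 1 = 0) by (unfold mdet in hL; simpl in hL; lra).
  assert (g2 : a*(2-a) - b*c - 1 = 0) by (unfold mdet in hB; simpl in hB; lra).
  assert (g3 : mtr (mmul BB LL) - 2 = 0) by lra.
  assert (Cq : q = (- 2*p*a^4*b - 6*p*a^3*b - 4*p*a^2*b^2*c + 24*p*a^2*b - 14*p*a*b^2*c - 24*p*a*b - 2*p*b^3*c^2 + 16*p*b^2*c + 12*p*b + 2*q*a^5 - 21*q*a^4 + 4*q*a^3*b*c + 58*q*a^3 - 25*q*a^2*b*c - 72*q*a^2 + 2*q*a*b^2*c^2 + 30*q*a*b*c + 40*q*a - 8*q*b^2*c^2 - 14*q*b*c - 8*q - 7*r*a^2*b^2 + 12*r*a*b^2 - 11*r*b^3*c - 6*r*b^2 + 2*a^4*b - 2*a^3*b + 4*a^2*b^2*c - 4*a^2*b + 6*a*b^2*c + 8*a*b + 2*b^3*c^2 - 12*b^2*c - 20*b) * (p*(2-p) - q*r - 1) + (- 8*p*q^2*a*c + 4*p*q^2*c - 24*p*q*r*a*b + 20*p*q*r*b + 24*p*q*a^2 - 36*p*q*a - 4*p*q*b*c + 12*p*q - 4*p*r*b^2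 + 2*p*a^2*b - 6*p*a*b + 2*p*b^2*c + 2*p*b + 16*q^2*r*a^2 - 24*q^2*r*a - 8*q^2*r*b*c + 8*q^2*r + 20*q^2*a*c - 10*q^2*c - 8*q*r^2*b^2 + 44*q*r*a*b - 34*q*r*b - 2*q*a^3 - 15*q*a^2 - 2*q*a*b*c + 26*q*a + 8*q*b*c - 13*q + 3*r*b^2 - 2*a^2*b + 6*a*b - 2*b^2*c - 2*b) * (a*(2-a) - b*c - 1) + (- 12*p^2*a^2*b + 26*p^2*a*b - 14*p^2*b - 8*p*q*a^2 - 16*p*q*a*b*c + 12*p*q*a + 14*p*q*b*c - 4*p*q - 16*p*r*a*b^2 + 18*p*r*b^2 + 32*p*a^2*b - 88*p*a*b + 8*p*b^2*c + 56*p*b + 4*q^2*a^2*c - 10*q^2*a*c + 4*q^2*c - 4*q*r*a*b - 12*q*r*b^2*c + 2*q*r*b + 32*q*a^2 + 16*q*a*b*c - 60*q*a + 22*q - 4*r^2*b^3 + 16*r*a*b^2 - 28*r*b^2 - 20*a^2*b + 62*a*b - 8*b^2*c - 43*b) * (mtr (mmul BB LL) - 2) + (2*b) * (m11 (rel_lhs LL BB) - m11 (rel_rhs LL BB)) + (- 2*a + 1) * (m12 (rel_lhs LL BB) - m12 (rel_rhs LL BB))) by (unfold LL, BB, mtr, rel_lhs, rel_rhs, mprod, minv, mpowZ, mmul, mid; simpl; ring).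
  rewrite g1, g2, g3, hrel in Cq.
  assert (Cr : r = (- 8*p*a^6*c + 48*p*a^5*c - 8*p*a^4*b*c^2 - 166*p*a^4*c + 96*p*a^3*b*c^2 + 330*p*a^3*c + 8*p*a^2*b^2*c^3 - 284*p*a^2*b*c^2 - 356*p*a^2*c + 48*p*a*b^2*c^3 + 322*p*a*b*c^2 + 192*p*a*c + 8*p*b^3*c^4 - 54*p*b^2*c^3 - 132*p*b*c^2 - 44*p*c - 8*q*a^5*c^2 + 32*q*a^4*c^2 - 16*q*a^3*b*c^3 - 72*q*a^3*c^2 + 64*q*a^2*b*c^3 + 105*q*a^2*c^2 - 8*q*a*b^2*c^4 - 104*q*a*b*c^3 - 80*q*a*c^2 + 32*q*b^2*c^4 + 69*q*b*c^3 + 22*q*c^2 - 8*r*a^5*b*c - 2*r*a^5 + 48*r*a^4*b*c - r*a^4 - 16*r*a^3*b^2*c^2 - 140*r*a^3*b*c + 30*r*a^3 + 96*r*a^2*b^2*c^2 + 191*r*a^2*b*c - 68*r*a^2 - 8*r*a*b^3*c^3 - 170*r*a*b^2*c^2 - 106*r*a*b*c + 64*r*a + 48*r*b^3*c^3 + 92*r*b^2*c^2 + 10*r*b*c - 24*r + 8*a^6*c - 48*a^5*c + 8*a^4*b*c^2 + 166*a^4*c - 96*a^3*b*c^2 - 418*a^3*c - 8*a^2*b^2*c^3 + 284*a^2*b*c^2 + 616*a^2*c - 48*a*b^2*c^3 - 410*a*b*c^2 - 448*a*c - 8*b^3*c^4 + 54*b^2*c^3 + 216*b*c^2 + 116*c)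 * (p*(2-p) - q*r - 1) + (64*p*q*r*a^3*c - 192*p*q*r*a^2*c + 64*p*q*r*a*b*c^2 + 200*p*q*r*a*c - 64*p*q*r*b*c^2 - 68*p*q*r*c + 16*p*q*a^2*c^2 - 32*p*q*a*c^2 + 16*p*q*b*c^3 + 20*p*q*c^2 - 8*p*r^2*a*b + 12*p*r^2*b + 16*p*r*a^2*b*c - 24*p*r*a^2 - 32*p*r*a*b*c + 60*p*r*a + 16*p*r*b^2*c^2 + 20*p*r*b*c - 36*p*r + 8*p*a^4*c - 32*p*a^3*c + 46*p*a^2*c - 14*p*a*c - 8*p*b^2*c^3 - 2*p*b*c^2 + 2*p*c + 32*q^2*r*a^2*c^2 - 64*q^2*r*a*c^2 + 32*q^2*r*b*c^3 + 40*q^2*r*c^2 + 32*q*r^2*a^2*b*c + 16*q*r^2*a^2 - 64*q*r^2*a*b*c - 40*q*r^2*a + 32*q*r^2*b^2*c^2 + 40*q*r^2*b*c + 24*q*r^2 - 96*q*r*a^3*c + 288*q*r*a^2*c - 96*q*r*a*b*c^2 - 316*q*r*a*c + 96*q*r*b*c^2 + 126*q*r*c + 8*q*a^3*c^2 - 48*q*a^2*c^2 + 8*q*a*b*c^3 + 72*q*a*c^2 - 32*q*b*c^3 - 21*q*c^2 - 4*r^2*a*b + 6*r^2*b + 8*r*a^3*b*c + 2*r*a^3 - 32*r*a^2*b*c + 21*r*a^2 + 8*r*a*b^2*c^2 + 42*r*a*b*c - 62*r*a - 16*r*b^2*c^2 - 20*r*b*c + 35*r - 8*a^4*c + 32*a^3*c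 - 46*a^2*c + 14*a*c + 8*b^2*c^3 + 2*b*c^2 - 2*c) * (a*(2-a) - b*c - 1) + (- 32*p^2*a^3*c + 84*p^2*a^2*c - 32*p^2*a*b*c^2 - 74*p^2*a*c + 32*p^2*b*c^2 + 22*p^2*c + 16*p*q*a^3*c^2 - 64*p*q*a^2*c^2 + 16*p*q*a*b*c^3 + 80*p*q*a*c^2 - 32*p*q*b*c^3 - 34*p*q*c^2 + 48*p*r*a^3*b*c - 160*p*r*a^2*b*c + 8*p*r*a^2 + 48*p*r*a*b^2*c^2 + 176*p*r*a*b*c - 20*p*r*a - 64*p*r*b^2*c^2 - 62*p*r*b*c + 12*p*r + 64*p*a^3*c - 32*p*a^2*b*c^2 - 224*p*a^2*c + 128*p*a*b*c^2 + 240*p*a*c - 32*p*b^2*c^3 - 152*p*b*c^2 - 80*p*c + 48*q*r*a^2*b*c^2 - 96*q*r*a*b*c^2 + 4*q*r*a*c + 48*q*r*b^2*c^3 + 60*q*r*b*c^2 - 6*q*r*c - 32*q*a^2*c^2 + 64*q*a*c^2 - 32*q*b*c^3 - 40*q*c^2 + 16*r^2*a^2*b^2*c + 4*r^2*a^2*b - 32*r^2*a*b^2*c - 6*r^2*a*b + 16*r^2*b^3*c^2 + 20*r^2*b^2*c - 32*r*a^3*b*c + 160*r*a^2*b*c + 16*r*a^2 - 32*r*a*b^2*c^2 - 224*r*a*b*c - 28*r*a + 96*r*b^2*c^2 + 108*r*b*c + 6*r - 24*a^3*c + 32*a^2*b*c^2 + 124*a^2*c - 88*a*b*c^2 - 158*a*c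 + 32*b^2*c^3 + 120*b*c^2 + 57*c) * (mtr (mmul BB LL) - 2) + (- 8*a^2*c + 16*a*c - 8*b*c^2 - 10*c) * (m11 (rel_lhs LL BB) - m11 (rel_rhs LL BB)) + (2*a - 3) * (m21 (rel_lhs LL BB) - m21 (rel_rhs LL BB))) by (unfold LL, BB, mtr, rel_lhs, rel_rhs, mprod, minv, mpowZ, mmul, mid; simpl; ring).
  rewrite g1, g2, g3, hrel in Cr.
  assert (Cp1 : (p - 1) = (2*p*a^5 - 11*p*a^4 + 4*p*a^3*b*c + 36*p*a^3 - 16*p*a^2*b*c - 68*p*a^2 + 2*p*a*b^2*c^2 + 40*p*a*b*c + 64*p*a + 3*p*b^2*c^2 - 32*p*b*c - 24*p + 13*q*a^3*c - 34*q*a^2*c + 9*q*a*b*c^2 + 28*q*a*c - 4*q*c + 2*r*a^4*b - 11*r*a^3*b + 4*r*a^2*b^2*c + 28*r*a^2*b - 15*r*a*b^2*c - 32*r*a*b + 2*r*b^3*c^2 + 22*r*b^2*c + 12*r*b - 2*a^5 + 11*a^4 - 4*a^3*b*c - 36*a^3 + 24*a^2*b*c + 92*a^2 - 2*a*b^2*c^2 - 56*a*b*c - 124*a + 5*b^2*c^2 + 64*b*c + 60) * (p*(2-p) - q*r - 1) + (8*p*q^2*c^2 - 16*p*q*r*a^2 + 40*p*q*r*a + 8*p*q*r*b*c - 24*p*q*r - 28*p*q*a*c + 30*p*q*c - 4*p*r*a*b + 6*p*r*b - 2*p*a^3 + 7*p*a^2 - 2*p*a*b*c - 8*p*a + 5*p*b*c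 - p - 24*q^2*r*a*c + 28*q^2*r*c - 20*q^2*c^2 - 8*q*r^2*a*b + 12*q*r^2*b + 24*q*r*a^2 - 60*q*r*a - 20*q*r*b*c + 36*q*r + 27*q*a*c - 30*q*c - 2*r*a^2*b + 7*r*a*b - 2*r*b^2*c - 6*r*b + 2*a^3 - 7*a^2 + 2*a*b*c + 8*a - 5*b*c + 1) * (a*(2-a) - b*c - 1) + (8*p^2*a^2 + 12*p^2*a*b*c - 20*p^2*a - 12*p^2*b*c + 12*p^2 - 4*p*q*a^2*c + 22*p*q*a*c + 12*p*q*b*c^2 - 20*p*q*c - 12*p*r*a^2*b + 34*p*r*a*b + 4*p*r*b^2*c - 24*p*r*b - 16*p*a^2 - 24*p*a*b*c + 52*p*a + 44*p*b*c - 42*p - 4*q^2*a*c^2 + 8*q^2*c^2 - 12*q*r*a*b*c + 22*q*r*b*c - 24*q*a*c - 16*q*b*c^2 + 32*q*c - 4*r^2*a*b^2 + 6*r^2*b^2 + 8*r*a^2*b - 36*r*a*b - 8*r*b^2*c + 36*r*b + 6*a^2 + 12*a*b*c - 29*a - 34*b*c + 30) * (mtr (mmul BB LL) - 2) + (2*a - 3) * (m11 (rel_lhs LL BB) - m11 (rel_rhs LL BB)) + (2*c) * (m12 (rel_lhs LL BB) - m12 (rel_rhs LL BB))) by (unfold LL, BB, mtr, rel_lhs, rel_rhs, mprod, minv, mpowZ, mmul, mid; simpl; ring).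
  rewrite g1, g2, g3, hrel in Cp1.
  assert (Hq : q = 0) by (rewrite Cq; ring).
  assert (Hr : r = 0) by (rewrite Cr; ring).
  assert (Hp : p - 1 = 0) by (rewrite Cp1; ring).
  unfold LL, mid. apply M2_ext; simpl; lra.
Qed.
Lemma quarter_nonneg : forall u K, 0 < u -> 0 <= 4*u*K -> 0 <= K.
Proof. intros u K Hu H. destruct (Rle_or_lt 0 K) as [h|h]; [exact h|]. exfalso. assert (0 < 4*u*(-K)) by (apply Rmult_lt_0_compat; lra). lra. Qed.

Lemma ellip : forall L B : M2, mdet L = 1 -> mdet B = 1 -> mtr L * mtr L < 4 ->
  0 <= (mtr B)^2 + (mtr L)^2 + (mtr (mmul B L))^2 - (mtr B)*(mtr L)*(mtr (mmul B L)) - 4.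
Proof.
  intros [p q r s] [a b c d] hL hB hy. unfold mdet, mtr in *; simpl in *.
  destruct (Req_dec r 0) as [Hr|Hr].
  - exfalso. subst r. assert (0 <= (p - s)^2) by apply pow2_ge_0. nra.
  - set (y := p + s) in *.
    set (ru := r*(a-d) - 2*p*c).
    set (X := r*a*p + b*(r*r) - (c*(p*p) + p*d*r)).
    set (rs := c - X). set (rP := c + X).
    match goal with |- 0 <= ?K => assert (Id : 4*(r*r)*K
       = (2*ru + y*rs)^2 + (4 - y*y)*rP^2 + (- 4*p*r*a*c + 4*p*r*c*d - 4*p*s*c^2 - 4*q*r*c^2 - 8*r^2*b*c + 4*r*s*a*c - 4*r*s*c*d + 4*c^2) * (p*s - q*r - 1) + (- 4*p^2*r^2 - 8*p*r^2*s - 4*r^2*s^2 + 16*r^2) * (a*d - b*c - 1))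
      by (unfold ru, rs, rP, X, y; ring) end.
    replace (p*s - q*r - 1) with 0 in Id by lra. replace (a*d - b*c - 1) with 0 in Id by lra.
    assert (0 <= (2*ru + y*rs)^2) by apply pow2_ge_0.
    assert (0 <= (4 - y*y)*rP^2) by (apply Rmult_le_pos; [lra | apply pow2_ge_0]).
    assert (0 < r*r) by (apply (Rsqr_pos_lt r Hr)).
    apply (quarter_nonneg (r*r)); [assumption|]. rewrite Id. lra.
Qed.

Lemma minv_mid : minv mid = mid.
Proof. apply M2_ext; simpl; ring. Qed.
Lemma mpow_mid : forall k, mpow_nat mid k = mid.
Proof. induction k as [|k IH]; simpl; [reflexivity|]. rewrite IH. apply mmul_mid_l. Qed.
Lemma mpowZ_mid : forall n, mpowZ mid n = mid.
Proof. intros [|p|p]; simpl; [reflexivity| apply mpow_mid | rewrite minv_mid; apply mpow_mid]. Qed.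

Lemma LI_B : forall n B, mdet B = 1 -> fill_img n mid B = mid -> B = mid.
Proof.
  intros n B hB Hf. unfold fill_img in Hf. rewrite mpowZ_mid, mmul_mid_r in Hf.
  rewrite <- Hf. destruct B as [a b c d]. unfold mdet in hB; simpl in hB.
  apply M2_ext; simpl.
  - transitivity ((a*d - b*c)^3 * a); [rewrite hB; ring | ring].
  - transitivity ((a*d - b*c)^3 * b); [rewrite hB; ring | ring].
  - transitivity ((a*d - b*c)^3 * c); [rewrite hB; ring | ring].
  - transitivity ((a*d - b*c)^3 * d); [rewrite hB; ring | ring].
Qed.

Lemma sl2_main : forall n L B, (n <= -3)%Z -> SL2_rep n L B -> L = mid /\ B = mid.
Proof.
  intros n L B Hn [hL [hB [hrel hfill]]]. unfold inSL2 in hL, hB.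
  destruct n as [|p|p]; try lia.
  assert (Hk : (3 <= Pos.to_nat p)%nat) by lia.
  pose proof (mu_pow L B p hL hfill) as Hmu.
  pose proof (tr_mu L B) as eM. rewrite Hmu, tr_pow in eM by exact hL.
  pose proof (tr_muL L B) as eML. rewrite Hmu, <- mpow_succ_r, tr_pow in eML by exact hL.
  pose proof (tr_lhs L B) as a1. pose proof (tr_rhs L B) as a2. rewrite hrel in a1. rewrite a1 in a2.
  pose proof (tr_lhsB L B) as b1. pose proof (tr_rhsB L B) as b2. rewrite hrel in b1. rewrite b1 in b2.
  pose proof (tr_lhsL L B) as c1. pose proof (tr_rhsL L B) as c2. rewrite hrel in c1. rewrite c1 in c2.
  rewrite hL, hB in eM, eML, a2, b2, c2.
  pose proof (ellip L B hL hB) as hell.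
  assert (Hpara : mtr L = 2 /\ mtr B = 2 /\ mtr (mmul B L) = 2).
  { set (x := mtr B) in *. set (y := mtr L) in *. set (z := mtr (mmul B L)) in *.
    assert (hI : (- x^4 + x^3*y*z + x^3*z - x^2*y^2 - x^2*y*z^2 - x^2*z^2 + 4*x^2 + x*y^2*z + x*z^3 - 4*x*z + y - 2) = 0) by lra.
    assert (hB' : (- x^5 + x^4*y*z - x^3*y^2 - x^3*z^2 + 5*x^3 - x^2*y*z + x*y^2 + x*y + x*z^2 - 5*x - z) = 0) by lra.
    assert (hL' : (- x^4*y + x^3*y^2*z + x^3*y*z - x^2*y^3 - x^2*y^2*z^2 - x^2*y*z^2 + 4*x^2*y + x^2 + x*y^3*z + x*y*z^3 - 5*x*y*z + y^2 - y + z^2 - 2) = 0) by lra.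
    assert (hM : (- x^7 + x^6*y*z - x^5*y^2 - x^5*z^2 + 7*x^5 - 3*x^4*y*z + 3*x^3*y^2 + 3*x^3*z^2 - 14*x^3 + 2*x^2*y*z - x*y^2 - 2*x*z^2 + 7*x - y*z) = cheb y (Pos.to_nat p)) by lra.
    assert (hML : (- x^6*z + x^5*y*z^2 + x^5*y - 2*x^4*y^2*z - x^4*z^3 + 5*x^4*z + x^3*y^3 - 4*x^3*y + x^2*y^2*z + x^2*z^3 - 4*x^2*z + x*y - z) = cheb y (S (Pos.to_nat p))) by lra.
    exact (traceland x y z (Pos.to_nat p) Hk hI hB' hL' hM hML hell). }
  destruct Hpara as [Hy [Hx Hz]].
  assert (HL : L = mid) by (exact (para L B hL hB Hy Hx Hz hrel)).
  split; [exact HL|]. subst L. exact (LI_B _ B hB hfill).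
Qed.

Lemma mopp_mopp : forall A, mopp (mopp A) = A.
Proof. intros []; apply M2_ext; simpl; ring. Qed.
Lemma det_mopp : forall A, mdet (mopp A) = mdet A.
Proof. intros []; unfold mdet; simpl; ring. Qed.
Lemma rel_lhs_oppL : forall L B, rel_lhs (mopp L) B = mopp (rel_lhs L B).
Proof. intros [] []; apply M2_ext; simpl; ring. Qed.
Lemma rel_rhs_oppL : forall L B, rel_rhs (mopp L) B = rel_rhs L B.
Proof. intros [] []; apply M2_ext; simpl; ring. Qed.
Lemma rel_lhs_oppB : forall L B, rel_lhs L (mopp B) = rel_lhs L B.
Proof. intros [] []; apply M2_ext; simpl; ring. Qed.
Lemma rel_rhs_oppB : forall L B, rel_rhs L (mopp B) = rel_rhs L B.
Proof. intros [] []; apply M2_ext; simpl; ring. Qed.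
Lemma mu_oppL : forall L B, mu_img (mopp L) B = mu_img L B.
Proof. intros [] []; apply M2_ext; simpl; ring. Qed.
Lemma mu_oppB : forall L B, mu_img L (mopp B) = mopp (mu_img L B).
Proof. intros [] []; apply M2_ext; simpl; ring. Qed.
Lemma mmul_oppl : forall A B, mmul (mopp A) B = mopp (mmul A B).
Proof. intros [] []; apply M2_ext; simpl; ring. Qed.
Lemma mmul_oppr : forall A B, mmul A (mopp B) = mopp (mmul A B).
Proof. intros [] []; apply M2_ext; simpl; ring. Qed.
Lemma minv_opp : forall A, minv (mopp A) = mopp (minv A).
Proof. intros []; apply M2_ext; simpl; ring. Qed.
Lemma mpow_opp : forall A k, mpow_nat (mopp A) k = mpow_nat A k \/ mpow_nat (mopp A) k = mopp (mpow_nat A k).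
Proof.
  intros A k; induction k as [|k [IH|IH]]; simpl.
  - left; reflexivity.
  - right. rewrite IH, mmul_oppl. reflexivity.
  - left. rewrite IH, mmul_oppl, mmul_oppr, mopp_mopp. reflexivity.
Qed.
Lemma mpowZ_opp : forall A n, mpowZ (mopp A) n = mpowZ A n \/ mpowZ (mopp A) n = mopp (mpowZ A n).
Proof.
  intros A [|p|p]; simpl.
  - left; reflexivity.
  - apply mpow_opp.
  - rewrite minv_opp. apply mpow_opp.
Qed.
Lemma psl_mid_opp : forall A, psl_eq A mid -> psl_eq (mopp A) mid.
Proof. intros A [H|H]; [right; rewrite H; reflexivity | left; rewrite H; apply mopp_mopp]. Qed.

Lemma psl_main : forall n L B, (n <= -3)%Z -> PSL2_rep n L B -> psl_eq L mid /\ psl_eq B mid.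
Proof.
  intros n L B Hn [hL [hB [hrel hfill]]].
  assert (H1 : exists L', (L' = L \/ L' = mopp L) /\ inSL2 L' /\ rel_lhs L' B = rel_rhs L' B /\ psl_eq (fill_img n L' B) mid).
  { destruct hrel as [hr|hr].
    - exists L. split; [left; reflexivity|]. split; [exact hL|]. split; [exact hr | exact hfill].
    - exists (mopp L). split; [right; reflexivity|]. split; [unfold inSL2; rewrite det_mopp; exact hL|].
      split.
      + rewrite rel_lhs_oppL, rel_rhs_oppL, hr. apply mopp_mopp.
      + unfold fill_img. rewrite mu_oppL. destruct (mpowZ_opp L n) as [e|e]; rewrite e; [exact hfill|].
        rewrite mmul_oppr. apply psl_mid_opp. exact hfill. }
  destruct H1 as [L' [HL' [hL' [hr' hf']]]].
  assert (H2 : exists B', (B' = B \/ B' = mopp B) /\ SL2_rep n L' B').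
  { destruct hf' as [hf|hf].
    - exists B. split; [left; reflexivity|]. repeat split; auto.
    - exists (mopp B). split; [right; reflexivity|]. split; [exact hL'|]. split; [unfold inSL2; rewrite det_mopp; exact hB|].
      split; [rewrite rel_lhs_oppB, rel_rhs_oppB; exact hr'|].
      unfold fill_img in *. rewrite mu_oppB, mmul_oppl, hf. apply mopp_mopp. }
  destruct H2 as [B' [HB' HS]].
  destruct (sl2_main n L' B' Hn HS) as [e1 e2].
  split.
  - destruct HL' as [h|h]; [left; rewrite <- h; exact e1 | right; rewrite <- e1, h, mopp_mopp; reflexivity].
  - destruct HB' as [h|h]; [left; rewrite <- h; exact e2 | right; rewrite <- e2, h, mopp_mopp; reflexivity].
Qed.

Theorem mainTheorem5 :
  exists N : Z, forall n : Z, (n <= N)%Z ->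
    (forall L B : M2, SL2_rep n L B -> L = mid /\ B = mid) /\
    (forall L B : M2, PSL2_rep n L B -> psl_eq L mid /\ psl_eq B mid).
Proof.
  exists (-3)%Z. intros n Hn. split.
  - intros L B H. exact (sl2_main n L B Hn H).
  - intros L B H. exact (psl_main n L B Hn H).
Qed.
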